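(* Consider a position in the Strong Ramsey game $\mathcal{R}(K_{\aleph_0}^{(3)}, \hat{K}_{2,4}^{(3)})$ in which $P_2$ has claimed all edges of a copy of $\hat{K}_{2,3}^{(3)}$, $P_1$ has claimed at most $10$ edges in total, and $P_1$ does not have a threat. If it is $P_2$'s turn, then $P_2$ has a strategy from this position guaranteeing that $P_1$ never claims all edges of a copy of $\hat{K}_{2,4}^{(3)}$ (a drawing strategy).
   Context: Strong Ramsey game $\mathcal{R}(B,G)$: players $P_1$, $P_2$ alternately claim unclaimed edges of the $k$-uniform hypergraph $B$, $P_1$ first; the first to claim all edges of a copy of the finite $k$-uniform hypergraph $G$ wins; if nobody does so in finitely many moves the game is a draw. $K_{\aleph_0}^{(3)}$ is the complete $3$-uniform hypergraph on a countably infinite vertex set. $\hat{K}_{2,l}$ ($l\ge3$) is $K_{2,l}$ plus the edge joining its two vertices of degree $l$. For a graph $H$, $H^{(3)}$ is the $3$-uniform hypergraph obtained by adding one fixed new vertex (the center) to every edge of $H$. $P_1$ has a threat if she has claimed all edges of a copy of $\hat{K}_{2,4}^{(3)}$ minus one edge $e$, where the edge of the board corresponding to $e$ is claimed by neither player. *)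

(* Defs.v *)
From HB Require Import structures.
From mathcomp Require Import all_boot finmap.
Set Implicit Arguments.
Unset Strict Implicit.
Unset Printing Implicit Defensive.
Local Open Scope fset_scope.

(* Vertex set of K_{aleph_0}^{(3)} is nat; an edge is a 3-element finite set. *)
Definition hedge := {fset nat}.
Definition board_edge (e : hedge) : Prop := #|` e| = 3.

(* H^{(3)}: add the fixed center c to every edge of the graph H. *)
Definition hyp3 (c : nat) (H : seq (nat * nat)) : seq hedge :=
  [seq [fset c; p.1; p.2] | p <- H].

(* \hat K_{2,l}: K_{2,l} with parts {1,2} and {3,...,l+2}, plus edge 12. *)
Definition Khat2 (l : nat) : seq (nat * nat) :=
  (1, 2) :: [seq (1, x) | x <- iota 3 l] ++ [seq (2, x) | x <- iota 3 l].

(* \hat K_{2,l}^{(3)} with center 0; vertex set {0,...,l+2}. *)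
Definition Khat3 (l : nat) : seq hedge := hyp3 0 (Khat2 l).
Definition nverts (l : nat) : nat := l + 3.

Definition has_copy (G : seq hedge) (nv : nat) (S : hedge -> Prop) : Prop :=
  exists f : nat -> nat, {in iota 0 nv &, injective f} /\
    forall e, e \in G -> S [fset f x | x in e].

Definition threat (P1 P2 : hedge -> Prop) : Prop :=
  exists f : nat -> nat, {in iota 0 (nverts 4) &, injective f} /\
    exists2 e0, e0 \in Khat3 4 &
      (forall e, e \in Khat3 4 -> e != e0 -> P1 [fset f x | x in e]) /\
      ~ P1 [fset f x | x in e0] /\ ~ P2 [fset f x | x in e0].

(* Continuation of the game from position (A,B) with P2 to move:
   m i is the i-th move; even i are P2's moves, odd i are P1's moves. *)
Definition claimed1 (A : {fset hedge}) (m : nat -> hedge) (n : nat) (e : hedge) : Prop :=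
  e \in A \/ exists2 i, i < n & odd i /\ m i = e.
Definition claimed2 (B : {fset hedge}) (m : nat -> hedge) (n : nat) (e : hedge) : Prop :=
  e \in B \/ exists2 i, i < n & ~~ odd i /\ m i = e.
Definition unclaimed_at (A B : {fset hedge}) (m : nat -> hedge) (n : nat) (e : hedge) : Prop :=
  board_edge e /\ ~ claimed1 A m n e /\ ~ claimed2 B m n e.

(* A strategy for P2 maps the history of moves (since the position) to a move. *)
Definition strategy := seq hedge -> hedge.

(* sigma is a legal strategy for P2 guaranteeing that P1 never claims all
   edges of a copy of \hat K_{2,4}^{(3)} (unless P2 has already won, ending the game):
   along every legal play consistent with sigma, sigma's moves are legal, and
   whenever P1 owns a copy, P2 already owns one (so P2 completed hers earlier). *)
Definition drawing_strategy (A B : {fset hedge}) (sigma : strategy) : Prop :=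
  forall (m : nat -> hedge) (n : nat),
    (forall i, i < n -> unclaimed_at A B m i (m i)) ->
    (forall i, i < n -> ~~ odd i -> m i = sigma (mkseq m i)) ->
    (~~ odd n -> unclaimed_at A B m n (sigma (mkseq m n))) /\
    (has_copy (Khat3 4) (nverts 4) (claimed1 A m n) ->
     has_copy (Khat3 4) (nverts 4) (claimed2 B m n)).

(* Main.v *)
From HB Require Import structures.
From mathcomp Require Import all_boot finmap.
Require Import Defs.
Set Implicit Arguments. Unset Strict Implicit. Unset Printing Implicit Defensive.
Local Open Scope fset_scope.
Definition K := Khat2 4.
Definition edge (p : nat * nat) : seq nat := [:: 0; p.1; p.2].
Definition tri (x y z : nat) : hedge := [fset x; y; z].
Definition img (f : nat -> nat) p : hedge := [fset f v | v in edge p].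
Lemma in_tri u x y z : (u \in tri x y z) = [|| u == x, u == y | u == z].
Proof. by rewrite /tri !inE orbA. Qed.
Lemma in_img f p u : (u \in img f p) = [|| u == f 0, u == f p.1 | u == f p.2].
Proof.
apply/imfsetP/idP => [[v]|].
  rewrite /= !inE => H ->. by case/or3P: H => /eqP->; rewrite eqxx ?orbT.
by case/or3P=> /eqP->; [exists 0|exists p.1|exists p.2]; rewrite //= !inE eqxx ?orbT.
Qed.
Lemma img_tri (f : nat -> nat) p : [fset f u | u in tri 0 p.1 p.2] = img f p.
Proof.
apply/fsetP => u; rewrite in_img; apply/imfsetP/idP => [[v]|].
  rewrite /= in_tri => H ->. by case/or3P: H => /eqP->; rewrite eqxx ?orbT.
by case/or3P=> /eqP->; [exists 0|exists p.1|exists p.2]; rewrite //= in_tri eqxx ?orbT.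
Qed.
Lemma Khat3E l e : (e \in Khat3 l) = has (fun p => e == tri 0 p.1 p.2) (Khat2 l).
Proof. rewrite /Khat3 /hyp3. elim: (Khat2 l) => //= p s IH. by rewrite inE IH. Qed.

Definition copy l (S : hedge -> Prop) f :=
  {in iota 0 (nverts l) &, injective f} /\ forall p, p \in Khat2 l -> S (img f p).

Lemma has_copyE l S : has_copy (Khat3 l) (nverts l) S <-> exists f, copy l S f.
Proof.
split=> [[f [Hi He]]|[f [Hi He]]]; exists f; split => //.
  move=> p Hp; rewrite -img_tri; apply: He; rewrite Khat3E; apply/hasP; by exists p.
move=> e; rewrite Khat3E => /hasP [p Hp /eqP->]; rewrite img_tri; exact: He.
Qed.

Lemma threatI (A B : {fset hedge}) f p0 : {in iota 0 7 &, injective f} -> p0 \in K ->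
  (forall p, p \in K -> p != p0 -> img f p \in A) -> img f p0 \notin A -> img f p0 \notin B ->
  threat (fun e => e \in A) (fun e => e \in B).
Proof.
move=> Hi Hp0 HA nA nB; exists f; split => //; exists (tri 0 p0.1 p0.2).
  rewrite Khat3E; apply/hasP; by exists p0.
split; last by rewrite img_tri; split; apply/negP.
move=> e; rewrite Khat3E => /hasP [p Hp /eqP->] Hne; rewrite img_tri; apply: HA => //.
by apply: contraNneq Hne => ->.
Qed.
Lemma C0 : all (fun p => all (fun v => v < 7) (edge p)) K. Proof. by []. Qed.
Lemma C1 : all (fun w => all (fun p => (w \in edge p) ==> has (fun q => (q != p) && (w \in edge q)) K) K) (iota 0 7).
Proof. by []. Qed.
Lemma C2 : all (fun p => all (fun q => all (fun w => w \in edge q) (edge p) ==> (p == q)) K) K.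
Proof. by []. Qed.
Definition thr w p0 p1 := all (fun r => (w \in edge r) ==> (r == p0) || (r == p1)) K.
Lemma C3 : all (fun w => all (fun w' => all (fun p0 => all (fun p1 => all (fun q =>
  ~~ [&& thr w p0 p1, thr w' p0 q, w \in edge p1, w' \in edge q & w \notin edge q]) K) K) K) (iota 0 7)) (iota 0 7).
Proof. by vm_compute. Qed.
Lemma C4 : all (fun w => all (fun p0 => all (fun p1 =>
  [&& thr w p0 p1 & w \in edge p1] ==> [&& 3 <= w, (p1 == (1,w)) || (p1 == (2,w)) & w \in edge p0]) K) K) (iota 0 7).
Proof. by vm_compute. Qed.
Lemma C5 : all (fun i => all (fun w => all (fun x => (x \notin [:: 0; i; w]) ==>
   has (fun q => [&& w \notin edge q, all (fun u => u \in [:: 0; i; x]) (edge q) & all (fun u => u \in edge q) [:: 0; i; x]]) K) (iota 0 7)) (iota 3 4)) [:: 1; 2].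
Proof. by vm_compute. Qed.
Lemma C6 : all (fun w => all (fun u => 4 <= count (fun q => u \in edge q) [seq q <- K | w \notin edge q]) [:: 0; 1; 2]) (iota 3 4).
Proof. by vm_compute. Qed.
Lemma C7 : all (fun w => size [seq q <- K | w \notin edge q] == 7) (iota 3 4) && uniq K.
Proof. by vm_compute. Qed.

Definition inj7 (f : nat -> nat) := {in iota 0 7 &, injective f}.

Lemma memK v p : p \in K -> v \in edge p -> v \in iota 0 7.
Proof. move=> Hp Hv; rewrite mem_iota /=; exact: (allP (allP C0 p Hp) v Hv). Qed.

Lemma img_inj f p q : inj7 f -> p \in K -> q \in K -> img f p = img f q -> p = q.
Proof.
move=> Hi Hp Hq E; apply/eqP; apply: (implyP (allP (allP C2 p Hp) q Hq)).
apply/allP => v Hv.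
have : f v \in img f q by rewrite -E; apply/imfsetP; exists v.
case/imfsetP => v' /= Hv' /Hi; rewrite (memK Hp Hv) (memK Hq Hv') => /(_ isT isT) ->.
exact: Hv'.
Qed.

Lemma thrP w p0 p1 : (forall r, r \in K -> w \in edge r -> r = p0 \/ r = p1) -> thr w p0 p1.
Proof.
move=> H; apply/allP => r Hr; apply/implyP => /(H r Hr) [->|->]; by rewrite eqxx ?orbT.
Qed.

Section Star.
Variables (A : {fset hedge}) (c t : nat).
Definition Yok y := (forall e, e \in A -> y \notin e) /\ y <> c /\ y <> t.
Definition star e := exists y, Yok y /\ e = tri c t y.

Lemma through f w y e0 r : Yok y -> f w = y -> r \in K -> w \in edge r ->
  (img f r \in A \/ star (img f r) \/ img f r = e0) -> img f r = e0 \/ img f r = tri c t y.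
Proof.
move=> [Ha [Hc Ht]] Hw Hr Hwr.
have Hy : y \in img f r by apply/imfsetP; exists w.
case=> [HA|[[y' [_ E]]|]]; last by left.
  by move: (Ha _ HA); rewrite Hy.
right; have : y \in tri c t y' by rewrite -E.
rewrite in_tri => /or3P[]/eqP H; [by case: Hc|by case: Ht|].
by rewrite E H.
Qed.

Lemma L1 f : inj7 f -> (forall p, p \in K -> img f p \in A \/ star (img f p)) ->
  forall p, p \in K -> img f p \in A.
Proof.
move=> Hi H p Hp; case: (H p Hp) => // [[y [Hy E]]].
have : y \in img f p by rewrite E in_tri eqxx !orbT.
case/imfsetP => w /= Hw Ew.
have := allP (allP C1 w (memK Hp Hw)) p Hp => /implyP/(_ Hw)/hasP [q Hq /andP [Hqp Hwq]].
have := through (e0:=tri c t y) Hy (esym Ew) Hq Hwq.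
case. by case: (H q Hq) => X; [left|right; left].
all: move=> Eq; move: Hqp; rewrite -E in Eq; by rewrite (img_inj Hi Hq Hp Eq) eqxx.
Qed.
End Star.
From Stdlib Require Import Classical.

Definition bad (A : {fset hedge}) c t := exists f w i, [/\ inj7 f, w \in iota 3 4, i \in [:: 1; 2],
  (forall q, q \in K -> w \notin edge q -> img f q \in A) &
  (f 0 == c) && (f i == t) || (f 0 == t) && (f i == c)].

Lemma L2 (A B : {fset hedge}) c t f e0 : inj7 f -> e0 \notin A -> e0 \notin B ->
  (forall p, p \in K -> img f p \in A \/ star A c t (img f p) \/ img f p = e0) ->
  ~ bad A c t -> ~ threat (fun e => e \in A) (fun e => e \in B) ->
  (forall g, ~ (inj7 g /\ forall p, p \in K -> img g p \in A)) -> False.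
Proof.
move=> Hi nA nB H nbad nthr ncopy.
case: (classic (exists p0, p0 \in K /\ img f p0 = e0)) => [[p0 [Hp0 E0]]|N0]; last first.
  apply: (ncopy f); split => //; apply: L1 => // p Hp.
  case: (H p Hp) => [X|[X|X]]; [by left|by right; exact X|].
  by case: N0; exists p.
case: (classic (exists p1, [/\ p1 \in K, p1 != p0 & star A c t (img f p1)])) => [[p1 [Hp1 Hne [y [Hy E1]]]]|N1]; last first.
  apply: nthr; apply: (threatI (p0:=p0) Hi Hp0); last 2 first.
  - by rewrite E0.
  - by rewrite E0.
  move=> p Hp Hne; case: (H p Hp) => [//|[X|X]].
    by case: N1; exists p.
  by move: Hne; rewrite -E0 in X; rewrite (img_inj Hi Hp Hp0 X) eqxx.
have : y \in img f p1 by rewrite E1 in_tri eqxx !orbT.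
case/imfsetP => w /= Hw1 Ew.
have thrw : forall w' y', Yok A c t y' -> f w' = y' -> forall p, p \in K -> img f p = tri c t y' ->
     w' \in edge p -> thr w' p0 p.
  move=> w' y' Hy' Ew' p Hp Ep Hw'; apply: thrP => r Hr Hwr.
  case: (through Hy' Ew' Hr Hwr (H r Hr)) => Er.
    by left; apply: (img_inj Hi Hr Hp0); rewrite Er E0.
  by right; apply: (img_inj Hi Hr Hp); rewrite Er Ep.
have T1 := thrw _ _ Hy (esym Ew) _ Hp1 E1 Hw1.
have Hw7 := memK Hp1 Hw1.
have := implyP (allP (allP (allP C4 w Hw7) p0 Hp0) p1 Hp1); rewrite T1 Hw1 => /(_ isT) /and3P [Hw3 Hp1w Hw0].
have Hall : forall q, q \in K -> w \notin edge q -> img f q \in A.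
  move=> q Hq Hwq; case: (H q Hq) => [//|[[y' [Hy' E']]|Eq]]; last first.
    by move: Hwq; rewrite -E0 in Eq; rewrite (img_inj Hi Hq Hp0 Eq) Hw0.
  have : y' \in img f q by rewrite E' in_tri eqxx !orbT.
  case/imfsetP => w' /= Hw'q Ew'.
  have T2 := thrw _ _ Hy' (esym Ew') _ Hq E' Hw'q.
  have := allP (allP (allP (allP (allP C3 w Hw7) w' (memK Hq Hw'q)) p0 Hp0) p1 Hp1) q Hq.
  by rewrite T1 T2 Hw1 Hw'q Hwq.
apply: nbad; exists f, w, p1.1; split => //.
- by rewrite mem_iota Hw3 /=; move: Hw7; rewrite mem_iota.
- by case/orP: Hp1w => /eqP->.
have Hw7' : w < 7 by move: Hw7; rewrite mem_iota.
have Hi1 : p1.1 \in iota 0 7 by case/orP: Hp1w => /eqP->.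
have Hz : 0 \in iota 0 7 by [].
have n0w : f 0 != f w.
  apply/negP => /eqP /Hi; rewrite Hz Hw7 => /(_ isT isT) E; by move: Hw3; rewrite -E.
have niw : f p1.1 != f w.
  apply/negP => /eqP /Hi; rewrite Hi1 Hw7 => /(_ isT isT) E; move: Hw3; rewrite -E.
  by case/orP: Hp1w => /eqP->.
have n0i : f 0 != f p1.1.
  apply/negP => /eqP /Hi; rewrite Hi1 Hz => /(_ isT isT) E.
  by case/orP: Hp1w E => /eqP->.
have Hp2 : p1.2 = w by case/orP: Hp1w => /eqP->.
have h0 : f 0 \in tri c t y by rewrite -E1 in_img eqxx.
have hi : f p1.1 \in tri c t y by rewrite -E1 in_img eqxx orbT.
rewrite Ew in h0 hi.
move: h0 hi n0w niw n0i; rewrite !in_tri.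
case/or3P => /eqP-> ; case/or3P => /eqP->; rewrite ?eqxx ?orbT //=.
Qed.

Lemma img_mem3 f q i x : all (fun u => u \in [:: 0; i; x]) (edge q) ->
  all (fun u => u \in edge q) [:: 0; i; x] ->
  forall u, (u \in img f q) = [|| u == f 0, u == f i | u == f x].
Proof.
move=> H1 H2 u; apply/imfsetP/idP => [[v Hv ->]|].
  by move: (allP H1 v Hv); rewrite !inE => /or3P[]/eqP->; rewrite eqxx ?orbT.
case/or3P => /eqP->; [exists 0|exists i|exists x] => //; apply: (allP H2); by rewrite !inE eqxx ?orbT.
Qed.

Lemma uniq_card (A : {fset hedge}) (s : seq hedge) : uniq s -> (forall x, x \in s -> x \in A) ->
  size s <= #|` A|.
Proof.
move=> Hu Hs; rewrite -(undup_id Hu) -card_fseq; apply: fsubset_leq_card.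
apply/fsubsetP => x; rewrite inE; exact: Hs.
Qed.

Section Count.
Variables (A B : {fset hedge}) (f0 : nat -> nat).
Hypothesis Hi0 : {in iota 0 6 &, injective f0}.
Hypothesis HB0 : forall p, p \in Khat2 3 -> img f0 p \in B.
Hypothesis Hdisj : forall e, e \in A -> e \notin B.
Hypothesis HcA : #|` A| <= 10.

Lemma f0_neq : [/\ f0 0 != f0 1, f0 0 != f0 2 & f0 1 != f0 2].
Proof.
by split; apply/negP => /eqP /Hi0; rewrite !mem_iota => /(_ isT isT).
Qed.

Lemma avoid t o f w i : (t = f0 1 /\ o = f0 2) \/ (t = f0 2 /\ o = f0 1) ->
  inj7 f -> w \in iota 3 4 -> i \in [:: 1; 2] ->
  (forall q, q \in K -> w \notin edge q -> img f q \in A) ->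
  (f 0 == f0 0) && (f i == t) || (f 0 == t) && (f i == f0 0) ->
  forall q, q \in K -> w \notin edge q -> o \notin img f q.
Proof.
move=> Hto Hi Hw Hii HA Hb q Hq Hwq; apply/negP => /imfsetP [x /= Hx Eo].
have [n01 n02 n12] := f0_neq.
have Hx7 := memK Hq Hx.
have hot : (o != f0 0) && (o != t).
  case: Hto => [[->->]|[->->]]; apply/andP; split => //; rewrite eq_sym //.
have Hxn : x \notin [:: 0; i; w].
  rewrite !inE; apply/negP => /or3P[]/eqP Ex; subst x.
  - move: hot; rewrite Eo; case/orP: Hb => /andP [/eqP-> _]; by rewrite eqxx ?andbF.
  - move: hot; rewrite Eo; case/orP: Hb => /andP [_ /eqP->]; by rewrite eqxx ?andbF.
  - by rewrite Hx in Hwq.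
have := implyP (allP (allP (allP C5 i Hii) w Hw) x Hx7) Hxn => /hasP [q' Hq' /and3P [Hwq' S1 S2]].
have Eq : img f q' = img f0 (1, 2).
  apply/fsetP => u; rewrite (img_mem3 f S1 S2) in_img /= -Eo.
  case/orP: Hb => /andP [/eqP-> /eqP->]; case: Hto => [[->->]|[->->]];
  by case: (u == f0 0); case: (u == f0 1); case: (u == f0 2).
have := Hdisj (HA q' Hq' Hwq'); rewrite Eq HB0 //.
Qed.

Lemma not_both_bad : ~ (bad A (f0 0) (f0 1) /\ bad A (f0 0) (f0 2)).
Proof.
case=> [[h [wh [ih [Hih Hwh Hiih HAh Hbh]]]] [g [wg [ig [Hig Hwg Hiig HAg Hbg]]]]].
have av := avoid (t:=f0 2) (o:=f0 1) (or_intror (conj erefl erefl)) Hig Hwg Hiig HAg Hbg.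
have [u [Hu Eu]] : exists u, u \in [:: 0; 1; 2] /\ h u = f0 1.
  case/orP: Hbh => /andP [/eqP E1 /eqP E2]; [exists ih|exists 0]; split => //.
  by move: Hiih; rewrite !inE => /orP[]/eqP->; rewrite eqxx ?orbT.
set s1 := [seq img g q | q <- [seq q <- K | wg \notin edge q]].
set s2 := [seq img h q | q <- [seq q <- [seq q <- K | wh \notin edge q] | u \in edge q]].
have Hs1 : size s1 = 7.
  by rewrite size_map; case/andP: C7 => /allP /(_ wg Hwg) /eqP.
have Hs2 : 4 <= size s2.
  by rewrite size_map size_filter; move: (allP (allP C6 wh Hwh) u Hu).
have uK : uniq K by case/andP: C7.
have : size (s1 ++ s2) <= #|` A|.
  apply: uniq_card.
    rewrite cat_uniq; apply/and3P; split.
    - rewrite map_inj_in_uniq ?filter_uniq // => p q; rewrite !mem_filter => /andP [_ Hp] /andP [_ Hq].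
      exact: img_inj.
    - apply/hasP => [[x]] /mapP [q]; rewrite !mem_filter => /andP [Huq /andP [_ Hq]] -> /mapP [q'].
      rewrite mem_filter => /andP [Hwq' Hq'] E.
      have := av q' Hq' Hwq'; rewrite -E; apply/negP/negPn; apply/imfsetP; by exists u.
    - rewrite map_inj_in_uniq ?filter_uniq // => p q; rewrite !mem_filter => /andP [_ /andP [_ Hp]] /andP [_ /andP [_ Hq]].
      exact: img_inj.
  move=> x; rewrite mem_cat => /orP [] /mapP [q]; rewrite !mem_filter.
    by case/andP => Hw Hq ->; apply: HAg.
  by case/andP => _ /andP [Hw Hq] ->; apply: HAh.
rewrite size_cat Hs1 => H; move: (leq_trans H HcA).
move: Hs2; rewrite -(leq_add2l 7) => H2 H3; by move: (leq_trans H2 H3).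
Qed.
End Count.
From Stdlib Require Import Classical.
From mathcomp Require Import zify.

Lemma C8 : all (fun x => has (fun p => x \in edge p) (Khat2 3)) (iota 0 6). Proof. by []. Qed.
Lemma C9 : all (fun p => (p \in Khat2 3) || (p == (1,6)) || (p == (2,6))) (Khat2 4). Proof. by []. Qed.
Lemma C10 : all (fun p => (p.1 < 6) && (p.2 < 6)) (Khat2 3). Proof. by []. Qed.

Lemma card_tri x y z : x != y -> x != z -> y != z -> board_edge (tri x y z).
Proof.
move=> xy xz yz; have -> : tri x y z = x |` (y |` [fset z]).
  by apply/fsetP => u; rewrite in_tri !inE orbA.
rewrite /board_edge !cardfsU1 cardfs1 !inE.
by rewrite (negbTE xy) (negbTE xz) (negbTE yz).
Qed.

Lemma take_mkseq T (m : nat -> T) k n : k <= n -> take k (mkseq m n) = mkseq m k.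
Proof. by move=> H; rewrite /mkseq -map_take take_iota (minn_idPl H). Qed.

Lemma mem_mkseqP (m : nat -> hedge) n e : reflect (exists2 i, i < n & m i = e) (e \in mkseq m n).
Proof.
apply: (iffP mapP) => [[i]|[i Hi <-]].
  by rewrite mem_iota /= => Hi ->; exists i.
by exists i; rewrite // mem_iota.
Qed.

Section Game.
Variables (A B : {fset hedge}) (f0 : nat -> nat) (sw : bool).
Hypothesis Hi0 : {in iota 0 6 &, injective f0}.
Hypothesis HB0 : forall p, p \in Khat2 3 -> img f0 p \in B.

Definition c := f0 0.
Definition s := if sw then f0 1 else f0 2.
Definition t := if sw then f0 2 else f0 1.

Definition vmax (h : seq hedge) := \max_(e <- enum_fset A ++ enum_fset B ++ h) \max_(x <- enum_fset e) x.
Definition fresh h := (vmax h).+1.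

Lemma fresh_gt h e x : e \in A \/ e \in B \/ e \in h -> x \in e -> x < fresh h.
Proof.
move=> He Hx; rewrite ltnS /vmax.
have He' : e \in enum_fset A ++ enum_fset B ++ h.
  by rewrite !mem_cat; case: He => [->|[->|->]]; rewrite ?orbT.
apply: leq_trans (leq_bigmax_seq _ He' isT).
exact: (leq_bigmax_seq _ Hx isT).
Qed.

Lemma f0_lt h x : x < 6 -> f0 x < fresh h.
Proof.
move=> Hx; have := allP C8 x; rewrite mem_iota => /(_ Hx) /hasP [p Hp Hxp].
apply: (fresh_gt (e := img f0 p)); first by right; left; apply: HB0.
by apply/imfsetP; exists x.
Qed.

Lemma cst_lt h : [/\ c < fresh h, s < fresh h & t < fresh h].
Proof. by rewrite /c /s /t; case: sw; split; apply: f0_lt. Qed.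

Lemma cst_neq : [/\ c != s, c != t & s != t].
Proof.
have [n01 n02 n12] := f0_neq Hi0.
by rewrite /c /s /t; case: sw; split => //; rewrite eq_sym.
Qed.

Definition sigma : strategy := fun h =>
  let y := fresh (take (size h - 2) h) in
  if (1 < size h) && (tri c t y \notin A) && (tri c t y \notin B) && (tri c t y \notin h)
  then tri c t y else tri c s (fresh h).



Lemma sigma_ok h : [/\ board_edge (sigma h), sigma h \notin A, sigma h \notin B & sigma h \notin h].
Proof.
have [cs ct st] := cst_neq.
rewrite /sigma; case: ifP => [/andP [/andP [/andP [_ nA] nB] nh]|_].
  have [cl _ tl] := cst_lt (take (size h - 2) h).
  split => //; apply: card_tri => //; apply/negP => /eqP E.
    by move: cl; rewrite E ltnn.
  by move: tl; rewrite E ltnn.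
have [cl sl _] := cst_lt h.
have Hy : fresh h \in tri c s (fresh h) by rewrite in_tri eqxx !orbT.
split.
- apply: card_tri => //; apply/negP => /eqP E;
  first [by move: cl; rewrite E ltnn | by move: sl; rewrite E ltnn].
- by apply/negP => H; have := fresh_gt (h:=h) (or_introl H) Hy; rewrite ltnn.
- by apply/negP => H; have := fresh_gt (h:=h) (or_intror (or_introl H)) Hy; rewrite ltnn.
- by apply/negP => H; have := fresh_gt (h:=h) (or_intror (or_intror H)) Hy; rewrite ltnn.
Qed.


Lemma P2copy (S : hedge -> Prop) Y : (forall x, x < 6 -> f0 x < Y) ->
  S (tri (f0 0) (f0 1) Y) -> S (tri (f0 0) (f0 2) Y) -> (forall e, e \in B -> S e) ->
  has_copy (Khat3 4) (nverts 4) S.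
Proof.
move=> HY S1 S2 SB; apply/has_copyE; exists (fun x => if x == 6 then Y else f0 x); split.
  move=> x y; rewrite !mem_iota /nverts /= => Hx Hy.
  case: eqP => [->|/eqP nx]; case: eqP => [->|/eqP ny] //.
  - move=> E; suff : false by []; have : y < 6 by lia.
    by move/HY; rewrite E ltnn.
  - move=> E; suff : false by []; have : x < 6 by lia.
    by move/HY; rewrite -E ltnn.
  - apply: Hi0; rewrite mem_iota /=; lia.
move=> p Hp; case/orP: (allP C9 p Hp) => [/orP[Hp3|/eqP->]|/eqP->].
- have /andP [h1 h2] := allP C10 p Hp3.
  suff -> : img (fun x => if x == 6 then Y else f0 x) p = img f0 p by apply: SB; apply: HB0.
  apply/fsetP => u; rewrite !in_img /=.
  by rewrite (ltn_eqF h1) (ltn_eqF h2).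
- suff -> : img (fun x => if x == 6 then Y else f0 x) (1,6) = tri (f0 0) (f0 1) Y by [].
  by apply/fsetP => u; rewrite in_img in_tri.
- suff -> : img (fun x => if x == 6 then Y else f0 x) (2,6) = tri (f0 0) (f0 2) Y by [].
  by apply/fsetP => u; rewrite in_img in_tri.
Qed.

Hypothesis nthr : ~ threat (fun e => e \in A) (fun e => e \in B).
Hypothesis ncopyA : forall g, ~ (inj7 g /\ forall p, p \in K -> img g p \in A).
Hypothesis nbad : ~ bad A c t.

Section Play.
Variables (m : nat -> hedge) (n : nat).
Hypothesis Hleg : forall i, i < n -> unclaimed_at A B m i (m i).
Hypothesis Hcons : forall i, i < n -> ~~ odd i -> m i = sigma (mkseq m i).

Definition Y k := fresh (mkseq m k.*2).

Lemma Yok_Y k : Yok A c t (Y k).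
Proof.
have [cl _ tl] := cst_lt (mkseq m k.*2).
split; last by split => E; [move: cl|move: tl]; rewrite -E ltnn.
move=> e He; apply/negP => H; have := fresh_gt (h := mkseq m k.*2) (or_introl He) H.
by rewrite ltnn.
Qed.

Lemma Y_notin k e : e \in A \/ e \in B \/ e \in mkseq m k.*2 -> Y k \notin e.
Proof. by move=> He; apply/negP => H; have := fresh_gt He H; rewrite ltnn. Qed.

Lemma P2move k : k.*2 < n -> (forall j, j < k -> m j.*2.+1 = tri c t (Y j)) ->
  m k.*2 = tri c s (Y k).
Proof.
move=> Hk Hf; rewrite (Hcons Hk) ?odd_double // /sigma size_mkseq.
case: k Hk Hf => [|k] Hk Hf; first by [].
have -> : (k.+1).*2 - 2 = k.*2 by rewrite doubleS; lia.
rewrite take_mkseq; last by rewrite doubleS; lia.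
rewrite (_ : (tri c t (Y k) \notin mkseq m (k.+1).*2) = false) ?andbF //.
apply/negbTE; rewrite negbK; apply/mem_mkseqP; exists k.*2.+1.
  by rewrite doubleS.
exact: Hf.
Qed.

Lemma odd_half i : odd i -> i = (i./2).*2.+1.
Proof. by move=> Hi; rewrite -{1}(odd_double_half i) Hi. Qed.

Lemma draw_n : has_copy (Khat3 4) (nverts 4) (claimed1 A m n) ->
  has_copy (Khat3 4) (nverts 4) (claimed2 B m n).
Proof.
move=> Hc.
case: (classic (exists k, (k.*2.+1 < n) && (m k.*2.+1 != tri c t (Y k)))) => [Hex|Nex]; last first.
  exfalso; case/has_copyE: Hc => f [Hi Hf]; apply: (ncopyA (g := f)); split => //.
  apply: (L1 (c := c) (t := t)) => // p Hp; case: (Hf p Hp) => [H|[i Hi1 [Hodd E]]]; [by left|right].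
  exists (Y i./2); split; first exact: Yok_Y.
  rewrite -E; apply: NNPP => H; apply: Nex; exists i./2.
  rewrite -(odd_half Hodd) Hi1 /=; by apply/eqP.
case: (ex_minnP Hex) => k /andP [Hk Hdev] Hmin.
have Hf : forall j, j < k -> m j.*2.+1 = tri c t (Y j).
  move=> j Hj; apply/eqP; apply/negP => /negP H.
  have : k <= j by apply: Hmin; rewrite H andbT; lia.
  by rewrite leqNgt Hj.
have Hm2k := P2move (ltnW Hk) Hf.
have [_ [nc1 nc2]] := Hleg Hk.
case: (ltngtP n k.*2.+2) => Hn.
- by exfalso; lia.
- (* P2 wins *)
  have Hs : m k.*2.+2 = tri c t (Y k).
    rewrite (Hcons Hn); last by rewrite /= odd_double.
    rewrite /sigma size_mkseq (_ : k.*2.+2 - 2 = k.*2); last by lia.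
    rewrite take_mkseq; last by lia.
    rewrite ifT //.
    have Hy : Y k \in tri c t (Y k) by rewrite in_tri eqxx !orbT.
    rewrite -!andbA; apply/and4P; split => //.
    + by apply/negP => H; have := Y_notin (k:=k) (or_introl H); rewrite Hy.
    + by apply/negP => H; have := Y_notin (k:=k) (or_intror (or_introl H)); rewrite Hy.
    apply/negP => /mem_mkseqP [i Hi Ei].
    case: (ltngtP i k.*2) => Hik.
    * have : m i \in mkseq m k.*2 by apply/mem_mkseqP; exists i.
      by move=> H; have := Y_notin (k:=k) (or_intror (or_intror H)); rewrite Ei Hy.
    * have Hi' : i = k.*2.+1 by lia.
      by move: Hdev; rewrite -Ei Hi' eqxx.
    * have : t \in tri c s (Y k) by rewrite -Hm2k -Hik Ei in_tri eqxx orbT.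
      have [cs ct st] := cst_neq.
      have [_ _ tl] := cst_lt (mkseq m k.*2).
      rewrite in_tri eq_sym (negbTE ct) eq_sym (negbTE st) /= => /eqP E.
      by move: tl; rewrite E -/(Y k) ltnn.
  apply: (P2copy (S := claimed2 B m n) (Y := Y k)).
  + move=> x Hx; exact: f0_lt.
  + right; move: Hm2k Hs; rewrite /c /s /t; case: sw => E1 E2.
    * by exists k.*2; [lia| rewrite odd_double E1].
    * by exists k.*2.+2; [lia| rewrite /= odd_double E2].
  + right; move: Hm2k Hs; rewrite /c /s /t; case: sw => E1 E2.
    * by exists k.*2.+2; [lia| rewrite /= odd_double E2].
    * by exists k.*2; [lia| rewrite odd_double E1].
  + by move=> e He; left.
-
  exfalso; case/has_copyE: Hc => f [Hi Hc].
  apply: (L2 (B := B) (e0 := m k.*2.+1) Hi) => //.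
  + by apply/negP => H; apply: nc1; left.
  + by apply/negP => H; apply: nc2; left.
  move=> p Hp; case: (Hc p Hp) => [H|[i Hi1 [Hodd E]]]; [by left|right].
  have Hi2 := odd_half Hodd.
  case: (ltngtP i./2 k) => Hik.
  * left; exists (Y i./2); split; first exact: Yok_Y.
    by rewrite -E {1}Hi2; apply: Hf.
  * by exfalso; lia.
  * by right; rewrite -E {1}Hi2 Hik.
- exact: nbad.
- exact: nthr.
Qed.
End Play.

Lemma sigma_draw : drawing_strategy A B sigma.
Proof.
move=> m n Hl Hc; split; last exact: draw_n.
move=> _; have [Hb nA nB nh] := sigma_ok (mkseq m n); split => //; split.
- case => [H|[i Hi [_ E]]]; first by rewrite H in nA.
  by move: nh; rewrite -E => /negP; apply; apply/mem_mkseqP; exists i.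
- case => [H|[i Hi [_ E]]]; first by rewrite H in nB.
  by move: nh; rewrite -E => /negP; apply; apply/mem_mkseqP; exists i.
Qed.

End Game.

Unset Implicit Arguments.
Theorem corollary3p3 (A B : {fset hedge}) :
  (forall e, e \in A -> board_edge e) ->
  (forall e, e \in B -> board_edge e) ->
  (forall e, e \in A -> e \notin B) ->
  #|` A| = (#|` B|).+1 ->
  #|` A| <= 10 ->
  has_copy (Khat3 3) (nverts 3) (fun e => e \in B) ->
  ~ has_copy (Khat3 4) (nverts 4) (fun e => e \in A) ->
  ~ threat (fun e => e \in A) (fun e => e \in B) ->
  exists sigma : strategy, drawing_strategy A B sigma.
Proof.
move=> _ _ Hdisj _ Hc10 HBc nAc nthr.
case/has_copyE: HBc => f0 [Hi0 HB0].
have ncopyA : forall g, ~ (inj7 g /\ forall p, p \in K -> img g p \in A).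
  by move=> g [Hg Hp]; apply: nAc; apply/has_copyE; exists g.
case: (classic (bad A (f0 0) (f0 1))) => Hb.
- exists (sigma A B f0 true); apply: sigma_draw => //.
  move=> Hb2; apply: (not_both_bad Hi0 HB0 Hdisj Hc10); by split.
- exists (sigma A B f0 false); exact: sigma_draw.
Qed.
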